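(* Let $I=\langle N,M,V\rangle$ be an ordered instance of goods and let $B\subseteq M$ be a bundle with $v_i(B)\ge\mu_i$ for some agent $i\in N$. If every agent $i'\in N\setminus\{i\}$ has an MMS partition containing a bundle $B_{i'}$ with $B_{i'}\succeq B$, then allocating $B$ to $i$ is a valid reduction.
   Context: An instance $I=\langle N,M,V\rangle$ has agents $N=\{1,\dots,n\}$, goods $M=\{1,\dots,m\}$ and additive valuations $v_i$ with $v_i(\emptyset)=0$, $v_i(S)=\sum_{g\in S}v_i(\{g\})$, $v_{ij}:=v_i(\{j\})\ge 0$. It is ordered if $v_{ij}\ge v_{i(j+1)}$ for all $i$ and $1\le j<m$. An allocation ($n$-partition) is an ordered $n$-tuple of pairwise disjoint, possibly empty subsets of $M$ with union $M$. The maximin share of $i$ in $I$ is $\mu_i=\mu_i^I=\max_A\min_j v_i(A_j)$ over all allocations $A$; an MMS partition of $i$ is an allocation $A$ with $v_i(A_j)\ge\mu_i$ for all $j$. For $B,B'\subseteq M$, $B$ dominates $B'$, written $B\succeq B'$, if there is an injective map $f:B'\to B$ with $f(j)\le j$ for all $j\in B'$. Removing agents $N'\subseteq N$ and items $M'\subseteq M$ is a valid reduction if the items of $M'$ can be allocated to the agents of $N'$ so that each $i'\in N'$ receives a bundle $B_{i'}$ with $v_{i'}(B_{i'})\ge\mu_{i'}^I$, and every $i\in N\setminus N'$ satisfies $\mu_i^{I'}\ge\mu_i^I$, where $I'=\langle N\setminus N', M\setminus M', V\rangle$ (valuations restricted, maximin share computed with $|N\setminus N'|$ bundles). ''Allocating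 $B$ to $i$ is a valid reduction'' means this holds with $N'=\{i\}$, $M'=B$. *)

(* Defs.v *)
From mathcomp Require Import all_boot all_order all_algebra.
Set Implicit Arguments. Unset Strict Implicit. Unset Printing Implicit Defensive.
Import Order.TTheory GRing.Theory Num.Theory.
Local Open Scope ring_scope.

(* Agents are 'I_n, goods are 'I_m (good j has index j; the order on goods
   is the order on indices). *)

Section Defs.
Variable R : realFieldType.
Variables n m : nat.

Definition bval (vi : 'I_m -> R) (S : {set 'I_m}) : R := \sum_(g in S) vi g.

Definition nonneg_vals (v : 'I_n -> 'I_m -> R) : Prop :=
  forall i g, 0 <= v i g.

Definition ordered_inst (v : 'I_n -> 'I_m -> R) : Prop :=
  forall i (j k : 'I_m), nat_of_ord k = (nat_of_ord j).+1 -> v i k <= v i j.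

Definition is_partition (k : nat) (S : {set 'I_m}) (P : {ffun 'I_k -> {set 'I_m}})
  : bool :=
  [forall j1, forall j2, (j1 != j2) ==> [disjoint P j1 & P j2]] &&
  (\bigcup_(j < k) P j == S).

(* maximin share of a valuation vi over the goods S with k bundles:
   max over k-partitions P of S of min_j vi(P j).  (The neutral elements
   0 for max and vi(S) for min are harmless for nonnegative valuations
   and k >= 1.) *)
Definition mms (vi : 'I_m -> R) (S : {set 'I_m}) (k : nat) : R :=
  \big[Num.max/0]_(P : {ffun 'I_k -> {set 'I_m}} | is_partition S P)
     \big[Num.min/bval vi S]_(j < k) bval vi (P j).

Definition mms_partition (vi : 'I_m -> R) (A : {ffun 'I_n -> {set 'I_m}}) : Prop :=
  is_partition [set: 'I_m] A /\ forall j, mms vi [set: 'I_m] n <= bval vi (A j).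

Definition dominates (B B' : {set 'I_m}) : Prop :=
  exists f : 'I_m -> 'I_m, {in B' &, injective f} /\
    forall j, j \in B' -> f j \in B /\ (f j <= j)%N.

Definition valid_reduction (v : 'I_n -> 'I_m -> R) (N' : {set 'I_n})
  (M' : {set 'I_m}) : Prop :=
  (exists Bs : 'I_n -> {set 'I_m},
     (forall i1 i2, i1 \in N' -> i2 \in N' -> i1 != i2 -> [disjoint Bs i1 & Bs i2]) /\
     \bigcup_(i in N') Bs i = M' /\
     (forall i, i \in N' -> mms (v i) [set: 'I_m] n <= bval (v i) (Bs i))) /\
  (forall i, i \notin N' ->
     mms (v i) [set: 'I_m] n <= mms (v i) (~: M') (n - #|N'|)).

End Defs.

(* Main.v *)
Require Import Defs.
From mathcomp Require Import all_boot all_order all_algebra.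
Import Order.TTheory GRing.Theory Num.Theory.
Local Open Scope ring_scope.

Lemma dom_diff (m : nat) (X Y : {set 'I_m}) : dominates X Y ->
  exists h : 'I_m -> 'I_m, {in Y :\: X &, injective h} /\
    forall g, g \in Y :\: X -> h g \in X :\: Y /\ (h g <= g)%N.
Proof.
move: {2}#|X :&: Y| (leqnn #|X :&: Y|) => k.
elim: k X Y => [|k IH] X Y Hk [f [finj fP]].
  have E : X :&: Y = set0 by apply/eqP; rewrite -cards_eq0 -leqn0.
  exists f; split.
    by move=> a b /setDP [aY _] /setDP [bY _]; apply: finj.
  move=> g /setDP [gY gX]; have [fX fle] := fP g gY; split => //.
  rewrite inE fX andbT; apply/negP => fY.
  by have := in_set0 (f g); rewrite -E inE fX fY.
case: (set_0Vmem (X :&: Y)) => [E|[x]].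
  apply: (IH X Y); last by exists f.
  by rewrite E cards0.
rewrite inE => /andP [xX xY].
pose f' := fun y => if f y == x then f x else f y.
have Hd : dominates (X :\ x) (Y :\ x).
  exists f'; split.
    move=> a b /setD1P [ax aY] /setD1P [bx bY]; rewrite /f'.
    case: eqP => fa; case: eqP => fb.
    - by move=> _; apply: finj => //; rewrite fa fb.
    - move=> E; have := finj _ _ xY bY E => xb.
      by rewrite xb eqxx in bx.
    - move=> E; have := finj _ _ aY xY E => ax'.
      by rewrite ax' eqxx in ax.
    - by apply: finj.
  move=> y /setD1P [yx yY]; rewrite /f'.
  case: eqP => fy.
    have [fX fle] := fP x xY; split.
      rewrite !inE fX andbT; apply/eqP => fxx.
      by move: yx; rewrite (finj y x yY xY) ?eqxx // fy fxx.
    have [_ fyle] := fP y yY; rewrite fy in fyle.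
    exact: leq_trans fle fyle.
  have [fX fle] := fP y yY; split => //.
  by rewrite !inE fX andbT; apply/eqP.
have Hk' : (#|(X :\ x) :&: (Y :\ x)| <= k)%N.
  have sub : (X :\ x) :&: (Y :\ x) \proper X :&: Y.
    apply/properP; split.
      by apply/subsetP => g; rewrite !inE => /andP [/andP [_ ->] /andP [_ ->]].
    by exists x; rewrite !inE ?xX ?xY ?eqxx.
  have H := proper_card sub.
  by rewrite -ltnS; apply: leq_trans H Hk.

have [h [hinj hP]] := IH (X :\ x) (Y :\ x) Hk' Hd.
  have E1 : Y :\: X = (Y :\ x) :\: (X :\ x).
    apply/setP => g; rewrite !inE; case: (eqVneq g x) => [->|]; by rewrite ?xX ?andbF.
  have E2 : X :\: Y = (X :\ x) :\: (Y :\ x).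
    apply/setP => g; rewrite !inE; case: (eqVneq g x) => [->|]; by rewrite ?xY ?andbF.
  exists h; rewrite E1 E2; split => //.
Qed.

Lemma le_bigmax_seq (R : realFieldType) (I : eqType) (r : seq I) (p : pred I)
  (F : I -> R) x0 i0 : i0 \in r -> p i0 ->
  F i0 <= \big[Num.max/x0]_(i <- r | p i) F i.
Proof.
elim: r => [//|a r IH]; rewrite inE big_cons => /orP [/eqP <- ->|Hr Hp].
  by rewrite le_max lexx.
case: (p a); last exact: IH.
by rewrite le_max IH ?orbT.
Qed.

Lemma bval_sub (R : realFieldType) (m : nat) (vi : 'I_m -> R) (A B : {set 'I_m}) :
  (forall g, 0 <= vi g) -> A \subset B -> bval vi A <= bval vi B.
Proof.
move=> H0 sAB; rewrite /bval [X in _ <= X](big_setID A) /=.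
rewrite (setIidPr sAB) lerDl; apply: sumr_ge0 => g _; exact: H0.
Qed.

Lemma disjP (T : finType) (A B : {set T}) :
  (forall x, x \in A -> x \in B -> False) -> [disjoint A & B].
Proof.
move=> H; rewrite disjoints_subset; apply/subsetP => x xA; rewrite inE.
by apply/negP => xB; exact: H xA xB.
Qed.

Lemma mms_lb (R : realFieldType) (m k : nat) (vi : 'I_m -> R) (S : {set 'I_m})
  (C : 'I_k.+1 -> {set 'I_m}) (c : R) :
  (forall g, 0 <= vi g) -> (forall t, C t \subset S) ->
  (forall t t', t != t' -> [disjoint C t & C t']) ->
  (forall t, c <= bval vi (C t)) -> c <= mms vi S k.+1.
Proof.
move=> H0 CS Cd Cc.
pose U := \bigcup_(t | t != ord0) C t.
pose Q := [ffun t : 'I_k.+1 => if t == ord0 then S :\: U else C t].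
have C0Q : C ord0 \subset Q ord0.
  rewrite /Q ffunE eqxx; apply/subsetP => g g0; rewrite inE (subsetP (CS ord0) g g0) andbT.
  apply/bigcupP => [[t tn gt]].
  by have := Cd _ _ tn; rewrite disjoint_sym => /disjointFr /(_ g0); rewrite gt.
have QP : is_partition S Q.
  apply/andP; split.
    apply/forallP => t1; apply/forallP => t2; apply/implyP => t12.
    rewrite /Q !ffunE.
    case: (eqVneq t1 ord0) => [e1|n1]; case: (eqVneq t2 ord0) => [e2|n2].
    - by rewrite e1 e2 eqxx in t12.
    - rewrite disjoint_sym; apply/disjP => g g2; rewrite inE => /andP [gU _].
      by move/negP: gU; apply; apply/bigcupP; exists t2.
    - apply/disjP => g g1; rewrite inE => /andP [gU _].
      by move/negP: gU; apply; apply/bigcupP; exists t1.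
    - exact: Cd.
  apply/eqP/setP => g; apply/bigcupP/idP.
    case=> t _; rewrite /Q ffunE; case: ifP => _; first by case/setDP.
    exact: (subsetP (CS t)).
  move=> gS; case: (boolP (g \in U)).
    by case/bigcupP => t tn gt; exists t => //; rewrite /Q ffunE (negbTE tn).
  by move=> gU; exists ord0 => //; rewrite /Q ffunE eqxx inE gU.
rewrite /mms.
apply: (le_trans _ (le_bigmax_seq _ _ _ _ (fun P : {ffun 'I_k.+1 -> {set 'I_m}} =>
   \big[Num.min/bval vi S]_(j < k.+1) bval vi (P j)) _ _ (mem_index_enum Q) QP)) => /=.
apply: (big_ind (fun x => c <= x)) => //.
- apply: le_trans (Cc ord0) _; apply: bval_sub => //.
- by move=> x y cx cy; rewrite le_min cx cy.
- move=> t _; rewrite /Q ffunE; case: ifP => [_|_]; last exact: Cc.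
  apply: le_trans (Cc ord0) _; apply: bval_sub => //.
  by move: C0Q; rewrite /Q ffunE eqxx.
Qed.

Lemma ord_mono (R : realFieldType) (n m : nat) (v : 'I_n -> 'I_m -> R) i
  (j k : 'I_m) : ordered_inst v -> (j <= k)%N -> v i k <= v i j.
Proof.
move=> Hord jk.
have: nat_of_ord k = (j + (k - j))%N by rewrite subnKC.
move: (k - j)%N => d; elim: d k {jk} => [|d IH] k Hk.
  by have -> : k = j by apply: val_inj; rewrite /= Hk addn0.
have k'lt : (k.-1 < m)%N := leq_ltn_trans (leq_pred k) (ltn_ord k).
pose k' := Ordinal k'lt.
apply: le_trans (IH k' _).
  by apply: Hord; rewrite /= Hk addnS.
by rewrite /= Hk addnS.
Qed.

Theorem lemma11 (R : realFieldType) (n m : nat) (v : 'I_n -> 'I_m -> R)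
  (Hnonneg : nonneg_vals v) (Hord : ordered_inst v)
  (B : {set 'I_m}) (i : 'I_n)
  (HiB : mms (v i) [set: 'I_m] n <= bval (v i) B)
  (Hdom : forall i' : 'I_n, i' != i ->
     exists A : {ffun 'I_n -> {set 'I_m}},
       mms_partition (v i') A /\ exists j, dominates (A j) B) :
  valid_reduction v [set i] B.
Proof.
split.
  exists (fun _ => B); split; [|split].
  - by move=> i1 i2; rewrite !inE => /eqP -> /eqP ->; rewrite eqxx.
  - by rewrite big_set1.
  - by move=> i0; rewrite inE => /eqP ->.
move=> i'; rewrite inE => ni.
have [A [[AP Amu] [j Adom]]] := Hdom i' ni.
rewrite cards1.
destruct n as [|[|k]].
- by have := ltn_ord i.
- by rewrite (ord1 i) (ord1 i') eqxx in ni.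
rewrite subn1 /=.
have [h [hinj hP]] := dom_diff _ _ _ Adom.
case/andP: AP => /forallP Ad /eqP Au.
have AD : forall j1 j2, j1 != j2 -> [disjoint A j1 & A j2].
  by move=> j1 j2 j12; have /forallP /(_ j2) /implyP := Ad j1; apply.
have BAl : forall l, l != j -> forall g, g \in B :&: A l -> g \in B :\: A j.
  move=> l lj g; rewrite !inE => /andP [gB gl]; rewrite gB andbT.
  by rewrite (disjointFr (AD _ _ lj) gl).
have lne : forall t : 'I_k.+1, lift j t != j by move=> t; rewrite eq_sym neq_lift.
pose C := fun t : 'I_k.+1 => (A (lift j t) :\: B) :|: h @: (B :&: A (lift j t)).
apply: (mms_lb _ _ _ _ _ C).
- exact: Hnonneg.
- move=> t; apply/subsetP => g; rewrite inE => /orP [|/imsetP [x xB ->]].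
    by rewrite !inE => /andP [].
  have [/setDP [_ hx] _] := hP x (BAl _ (lne _) _ xB).
  by rewrite inE.
- move=> t t' tt'; have ll : lift j t != lift j t'.
    by apply: contra tt' => /eqP /lift_inj ->.
  apply/disjP => g; rewrite !inE => /orP [/andP [_ g1]|/imsetP [x x1 ->]]
                                   /orP [/andP [_ g2]|/imsetP [y y2 e]].
  + by rewrite (disjointFr (AD _ _ ll) g1) in g2.
  + have [/setDP [hy _] _] := hP y (BAl _ (lne _) _ y2).
    by rewrite -e (disjointFr (AD _ _ (lne t)) g1) in hy.
  + have [/setDP [hx _] _] := hP x (BAl _ (lne _) _ x1).
    by rewrite (disjointFr (AD _ _ (lne t')) g2) in hx.
  + have xy := hinj x y (BAl _ (lne _) _ x1) (BAl _ (lne _) _ y2) e.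
    move: x1 y2; rewrite xy !inE => /andP [_ a] /andP [_ b].
    by rewrite (disjointFr (AD _ _ ll) a) in b.
- move=> t; apply: le_trans (Amu (lift j t)) _.
  set l := lift j t.
  have lj : l != j := lne t.
  rewrite /bval /C -/l (big_setID B) /=.
  rewrite [X in _ <= X](eq_bigl [predU (A l :\: B) & h @: (B :&: A l)]); last first.
    by move=> g; rewrite !inE.
  rewrite bigU /=; last first.
    apply/disjP => g; rewrite inE => /andP [_ gl] /imsetP [x x1 e].
    have [/setDP [hx _] _] := hP x (BAl _ lj _ x1).
    by rewrite -e (disjointFr (AD _ _ lj) gl) in hx.
  rewrite big_imset /=; last first.
    by move=> x y x1 y1; apply: hinj; apply: BAl lj _ _.
  rewrite addrC lerD2l setIC; apply: ler_sum => g gB.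
  have [_ hle] := hP g (BAl _ lj _ gB).
  exact: ord_mono.
Qed.
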